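(* Let $K\ge 2$, let $m_1<\cdots<m_K$ be pairwise co-prime positive integers, $M$ a positive integer and $M_k=Mm_k$. Let $N_1,N_2$ be nonnegative integers, $r_{l,k}=\langle N_l\rangle_{M_k}$, $r_l^c=\langle N_l\rangle_M$, and $\tilde r_{l,k}=r_{l,k}+\Delta r_{l,k}$ ($l=1,2$, $k=1,\ldots,K$) with integer errors $\Delta r_{l,k}$; let $\tau=\max_{l,k}|\Delta r_{l,k}|$ and $\tilde r^c_{l,k}=\langle\tilde r_{l,k}\rangle_M$. Sort the $2K$ numbers $\tilde r^c_{l,k}$ (with multiplicity) as $s_1\le\cdots\le s_{2K}$, put $D_k=s_{k+1}-s_k$ ($1\le k\le 2K-1$), $D_{2K}=s_1-s_{2K}+M$; assume $\tau<M/8$, so that there is a unique $k_0\in\{1,\ldots,K\}$ with $D_{k_0}+D_{k_0+K}>M/2$, and define the multisets $\Omega_1=\{s_{k_0+1},\ldots,s_{k_0+K}\}$ and $\Omega_2=\{s_1,\ldots,s_K\}$ if $k_0=K$, $\Omega_2=\{s_{k_0+K+1}-M,\ldots,s_{2K}-M,s_1,\ldots,s_{k_0}\}$ if $k_0\neq K$. If in addition $M/4\le|d_M(r_1^c,r_2^c)|\le M/2$, then for every $k\in\{1,\ldots,K\}$ there exist $\omega\in\Omega_1$ and $\upsilon\in\Omega_2$ such that either $$d_M(\tilde r^c_{1,k},\omega)=0\ \text{ and }\ d_M(\tilde r^c_{2,k},\upsilon)=0,$$ or $$d_M(\tilde r^c_{2,k},\omega)=0\ \text{ and }\ d_M(\tilde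 r^c_{1,k},\upsilon)=0.$$
   Context: For a positive integer $n$ and an integer $x$, $\langle x\rangle_n$ is the unique element of $\{0,\ldots,n-1\}$ congruent to $x$ modulo $n$. For real $x$, $[x]$ denotes the rounding integer, i.e. the integer with $-1/2\le x-[x]<1/2$. For reals $x,y$ and $C>0$, the circular distance is $d_C(x,y)=x-y-\left[\frac{x-y}{C}\right]C$; in particular $d_C(x,y)=0$ iff $x-y$ is an integer multiple of $C$. *)

(* Defs.v *)
From Stdlib Require Import Reals Lra Lia ZArith Arith List Permutation Sorting.Sorted.
Import ListNotations.
Open Scope Z_scope.

Definition modrep (x n : Z) : Z := x mod n.

(* rounding integer [x]: the integer z with -1/2 <= x - z < 1/2, i.e. floor(x + 1/2). *)
Definition round_R (x : R) : Z := Int_part (x + / 2)%R.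

Definition dC (C x y : R) : R := (x - y - IZR (round_R ((x - y) / C)) * C)%R.

Definition Nsel (N1 N2 : Z) (l : nat) : Z := if Nat.eqb l 1 then N1 else N2.

Definition r_lk (M : Z) (m : nat -> Z) (N1 N2 : Z) (l k : nat) : Z :=
  modrep (Nsel N1 N2 l) (M * m k).

Definition rc_l (M N1 N2 : Z) (l : nat) : Z := modrep (Nsel N1 N2 l) M.

Definition rt_lk (M : Z) (m : nat -> Z) (N1 N2 : Z) (Delta : nat -> nat -> Z)
  (l k : nat) : Z := r_lk M m N1 N2 l k + Delta l k.

Definition rtc_lk (M : Z) (m : nat -> Z) (N1 N2 : Z) (Delta : nat -> nat -> Z)
  (l k : nat) : Z := modrep (rt_lk M m N1 N2 Delta l k) M.

Definition all_rtc (K : nat) (M : Z) (m : nat -> Z) (N1 N2 : Z)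
  (Delta : nat -> nat -> Z) : list Z :=
  flat_map (fun k => [rtc_lk M m N1 N2 Delta 1 k; rtc_lk M m N1 N2 Delta 2 k])
    (seq 1 K).

(* 1-based access s_i *)
Definition sidx (s : list Z) (i : nat) : Z := nth (i - 1) s 0.

Definition Dgap (K : nat) (M : Z) (s : list Z) (i : nat) : Z :=
  if Nat.eqb i (2 * K) then sidx s 1 - sidx s (2 * K) + M
  else sidx s (i + 1) - sidx s i.

Definition Omega1 (K : nat) (s : list Z) (k0 : nat) : list Z :=
  map (sidx s) (seq (k0 + 1) K).

Definition Omega2 (K : nat) (M : Z) (s : list Z) (k0 : nat) : list Z :=
  if Nat.eqb k0 K then map (sidx s) (seq 1 K)
  else map (fun i => sidx s i - M) (seq (k0 + K + 1) (K - k0))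
       ++ map (sidx s) (seq 1 k0).

(* Main.v *)
Require Import Defs.
From Stdlib Require Import Reals ZArith Arith List Permutation Sorting.Sorted Lia Lra.
Import ListNotations.
From Stdlib Require Import Classical Bool.
Open Scope Z_scope.

Lemma round_IZR j : round_R (IZR j) = j.
Proof.
  unfold round_R, Int_part.
  rewrite <- (tech_up _ (j+1)); [lia| |]; rewrite plus_IZR; lra.
Qed.

Lemma dC_zero M x y j : M <> 0 -> x - y = j * M -> dC (IZR M) (IZR x) (IZR y) = 0%R.
Proof.
  intros HM H. unfold dC.
  assert (E : (IZR x - IZR y = IZR j * IZR M)%R) by (rewrite <- minus_IZR, <- mult_IZR; f_equal; exact H).
  assert (IZR M <> 0%R) by (apply not_0_IZR; exact HM).
  replace ((IZR x - IZR y) / IZR M)%R with (IZR j) by (rewrite E; field; auto).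
  rewrite round_IZR. rewrite E. ring.
Qed.

Lemma dist_int M a b : 0 < M ->
  (IZR M / 4 <= Rabs (dC (IZR M) (IZR a) (IZR b)))%R ->
  forall j, M <= 4 * Z.abs (a - b - j * M).
Proof.
  intros HM Hd j.
  set (z := ((IZR a - IZR b) / IZR M)%R).
  set (r := round_R z).
  assert (HMr : (0 < IZR M)%R) by (apply IZR_lt; exact HM).
  destruct (base_Int_part (z + /2)) as [B1 B2].
  fold (round_R z) in B1, B2. fold r in B1, B2.
  assert (C1 : (IZR r * IZR M <= IZR a - IZR b + IZR M / 2)%R).
  { replace (IZR a - IZR b + IZR M / 2)%R with ((z + /2) * IZR M)%R by (unfold z; field; lra).
    apply Rmult_le_compat_r; lra. }
  assert (C2 : (IZR r * IZR M > IZR a - IZR b - IZR M / 2)%R).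
  { replace (IZR a - IZR b - IZR M / 2)%R with ((z - /2) * IZR M)%R by (unfold z; field; lra).
    apply Rmult_gt_compat_r; lra. }
  assert (I1 : 2 * (r * M) <= 2 * (a - b) + M).
  { apply le_IZR. rewrite !plus_IZR, !mult_IZR, minus_IZR. lra. }
  assert (I2 : 2 * (r * M) > 2 * (a - b) - M).
  { apply Z.lt_gt, lt_IZR. rewrite !minus_IZR, !mult_IZR, minus_IZR. lra. }
  assert (I3 : M <= 4 * Z.abs (a - b - r * M)).
  { apply le_IZR. rewrite mult_IZR, <- Rabs_Zabs, !minus_IZR, mult_IZR.
    unfold dC in Hd. fold z in Hd. fold r in Hd. lra. }
  destruct (Z.lt_total j r) as [Hj|[Hj|Hj]].
  - assert (j * M <= r * M - M) by nia. lia.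
  - subst; lia.
  - assert (j * M >= r * M + M) by nia. lia.
Qed.
Definition inC (M tau c v : Z) : Prop := exists d j, -tau <= d <= tau /\ v = c + d + j * M.
Definition col (M tau c1 v : Z) : bool := (v - c1 + tau) mod M <=? 2 * tau.

Lemma col_iff M tau c1 v : 0 < M -> 0 <= tau -> 2*tau < M ->
  (col M tau c1 v = true <-> inC M tau c1 v).
Proof.
  intros HM Ht Ht2. unfold col, inC. rewrite Z.leb_le. split.
  - intros H. exists ((v - c1 + tau) mod M - tau), ((v - c1 + tau) / M).
    pose proof (Z.div_mod (v - c1 + tau) M ltac:(lia)).
    pose proof (Z.mod_pos_bound (v - c1 + tau) M HM). split; lia.
  - intros [d [j [Hd E]]].
    replace (v - c1 + tau) with ((d + tau) + j * M) by lia.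
    rewrite Z.mod_add by lia. rewrite Z.mod_small by lia. lia.
Qed.

Lemma inC_disj M tau c1 c2 v : 8*tau < M ->
  (forall j, M <= 4 * Z.abs (c1 - c2 - j * M)) ->
  inC M tau c1 v -> inC M tau c2 v -> False.
Proof.
  intros Ht Hd [d1 [j1 [H1 E1]]] [d2 [j2 [H2 E2]]].
  specialize (Hd (j2 - j1)). lia.
Qed.

Lemma P_val M tau c x y : 0 <= tau -> 8*tau < M -> 0 <= x <= y -> y < M ->
  inC M tau c x -> inC M tau c y ->
  (y - x <= 2*tau /\ forall v, x <= v <= y -> inC M tau c v) \/
  (M - 2*tau <= y - x /\ forall v, 0 <= v < M -> (v <= x \/ y <= v) -> inC M tau c v).
Proof.
  intros Ht HM Hx Hy [dx [a [Hdx Ex]]] [dy [b [Hdy Ey]]].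
  assert (Hba : b - a = 0 \/ b - a = 1).
  { assert (Eyx : y - x = dy - dx + (b - a) * M) by lia.
    destruct (Z.lt_total (b - a) 0) as [L|[L|L]].
    - assert ((b - a) * M <= - M) by nia. lia.
    - lia.
    - destruct (Z.eq_dec (b - a) 1); [lia|].
      assert ((b - a) * M >= 2 * M) by nia. lia. }
  destruct Hba as [Hba|Hba].
  - left. assert (b = a) by lia. subst b. split; [lia|].
    intros v Hv. exists (v - x + dx), a. split; lia.
  - right. assert (b = a + 1) by lia. subst b. split; [lia|].
    intros v Hv [Hv1|Hv1].
    + exists (v - x + dx), a. split; lia.
    + exists (v - y + dy), (a+1). split; lia.
Qed.

Lemma rtc_inC M m N1 N2 Delta l k tau : 0 < M -> 0 < m k -> Z.abs (Delta l k) <= tau ->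
  inC M tau (rc_l M N1 N2 l) (rtc_lk M m N1 N2 Delta l k).
Proof.
  intros HM Hm HD. unfold inC, rtc_lk, rt_lk, r_lk, rc_l, modrep.
  set (N := Nsel N1 N2 l). set (D := Delta l k).
  pose proof (Z.div_mod N (M * m k) ltac:(nia)).
  pose proof (Z.div_mod N M ltac:(lia)).
  pose proof (Z.div_mod (N mod (M * m k) + D) M ltac:(lia)).
  exists D, (N / M - m k * (N / (M * m k)) - (N mod (M * m k) + D) / M).
  split; [lia|]. nia.
Qed.

Lemma rtc_range M m N1 N2 Delta l k : 0 < M -> 0 <= rtc_lk M m N1 N2 Delta l k < M.
Proof. intros. unfold rtc_lk, modrep. apply Z.mod_pos_bound. lia. Qed.
Lemma sorted_nth_mono s : Sorted Z.le s -> forall i j, (i <= j)%nat -> (j < length s)%nat ->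
  nth i s 0 <= nth j s 0.
Proof.
  intros HS. apply Sorted_StronglySorted in HS; [|intros x y z; lia].
  induction HS as [|a s HS IH HF]; intros i j Hij Hj; simpl in *; [lia|].
  destruct i, j.
  - lia.
  - rewrite Forall_forall in HF. apply HF, nth_In. lia.
  - lia.
  - apply IH; lia.
Qed.

Lemma perm_filter_length {A} (f : A -> bool) l l' : Permutation l l' ->
  length (filter f l) = length (filter f l').
Proof.
  intros P. induction P; simpl; try lia.
  - destruct (f x); simpl; lia.
  - destruct (f x), (f y); simpl; lia.
Qed.

Lemma filter_seq_shift (g : nat -> bool) st n :
  length (filter g (seq (S st) n)) = length (filter (fun i => g (S i)) (seq st n)).
Proof.
  revert st; induction n; intros st; simpl; auto.
  destruct (g (S st)); simpl; rewrite IHn; auto.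
Qed.

Lemma filter_nth (f : Z -> bool) s :
  length (filter f s) = length (filter (fun i => f (nth i s 0)) (seq 0 (length s))).
Proof.
  induction s as [|a s IH]; simpl; auto.
  destruct (f a); simpl; rewrite (filter_seq_shift _ 0); simpl; rewrite IH; auto.
Qed.

Lemma interval_count a b n : (a <= b + 1)%nat ->
  length (filter (fun i => andb (Nat.leb a i) (Nat.leb i b)) (seq 0 n)) = (Nat.min n (b+1) - a)%nat.
Proof.
  intros Hab. induction n.
  - simpl. lia.
  - rewrite seq_S, filter_app, length_app, IHn.
    replace (Nat.min (S n) (b + 1)) with (if Nat.leb n b then S n else b + 1)%nat by
      (destruct (Nat.leb_spec n b); lia).
    cbn [filter seq length Nat.add].
    destruct (Nat.leb_spec a n), (Nat.leb_spec n b); cbn [andb filter length]; lia.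
Qed.

Lemma flat_count (f : Z -> bool) (g1 g2 : nat -> Z) st n :
  (forall k, (st <= k < st + n)%nat -> f (g1 k) = negb (f (g2 k))) ->
  length (filter f (flat_map (fun k => [g1 k; g2 k]) (seq st n))) = n.
Proof.
  revert st; induction n; intros st H; simpl; auto.
  assert (IH := IHn (S st) ltac:(intros; apply H; lia)).
  specialize (H st ltac:(lia)). rewrite H. destruct (f (g2 st)); simpl; rewrite IH; lia.
Qed.

Lemma find_min (f : nat -> bool) n : (exists l, (l < n)%nat /\ f l = true) ->
  exists q, (q < n)%nat /\ f q = true /\ forall l, (l < q)%nat -> f l = false.
Proof.
  induction n; intros [l [Hl Hf]]; [lia|].
  destruct (Nat.eq_dec l n).
  - destruct (classic (exists l, (l < n)%nat /\ f l = true)) as [Hex|Hn].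
    + destruct (IHn Hex) as [q [Hq [Hfq Hm]]]. exists q. split; [lia|]. split; auto.
    + exists l. split; [lia|]. split; [auto|]. intros l' Hl2. destruct (f l') eqn:E; auto.
      exfalso. apply Hn. exists l'. split; auto; lia.
  - assert (Hl' : (l < n)%nat) by lia.
    destruct (IHn (ex_intro _ l (conj Hl' Hf))) as [q [Hq [Hfq Hm]]].
    exists q. split; [lia|]. split; auto.
Qed.

Lemma find_max (f : nat -> bool) n : (exists l, (l < n)%nat /\ f l = true) ->
  exists r, (r < n)%nat /\ f r = true /\ forall l, (r < l < n)%nat -> f l = false.
Proof.
  induction n; intros [l [Hl Hf]]; [lia|].
  destruct (f n) eqn:En.
  - exists n. split; [lia|]. split; [auto|]. intros; lia.
  - assert (l <> n) by congruence.
    assert (Hl' : (l < n)%nat) by lia.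
    destruct (IHn (ex_intro _ l (conj Hl' Hf))) as [r [Hr [Hfr Hm]]].
    exists r. split; [lia|]. split; [auto|]. intros l' Hl2.
    destruct (Nat.eq_dec l' n); [subst; auto|]. apply Hm. lia.
Qed.

Theorem corollary2
  (K : nat) (m : nat -> Z) (M N1 N2 : Z) (Delta : nat -> nat -> Z)
  (s : list Z) (k0 : nat)
  (HK : (2 <= K)%nat)
  (Hmpos : forall k, (1 <= k <= K)%nat -> (0 < m k)%Z)
  (Hmincr : forall k, (1 <= k < K)%nat -> (m k < m (S k))%Z)
  (Hcop : forall i j, (1 <= i <= K)%nat -> (1 <= j <= K)%nat -> i <> j ->
            Z.gcd (m i) (m j) = 1%Z)
  (HM : (0 < M)%Z)
  (HN1 : (0 <= N1)%Z) (HN2 : (0 <= N2)%Z)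
  (Htau : forall l k, (1 <= l <= 2)%nat -> (1 <= k <= K)%nat ->
            (8 * Z.abs (Delta l k) < M)%Z)
  (Hsperm : Permutation s (all_rtc K M m N1 N2 Delta))
  (Hssort : Sorted Z.le s)
  (Hk0 : (1 <= k0 <= K)%nat)
  (Hk0gap : (2 * (Dgap K M s k0 + Dgap K M s (k0 + K)) > M)%Z)
  (Hk0uniq : forall k, (1 <= k <= K)%nat ->
            (2 * (Dgap K M s k + Dgap K M s (k + K)) > M)%Z -> k = k0)
  (Hdist : (IZR M / 4 <= Rabs (dC (IZR M) (IZR (rc_l M N1 N2 1)) (IZR (rc_l M N1 N2 2)))
            <= IZR M / 2)%R) :
  forall k, (1 <= k <= K)%nat ->
    exists omega upsilon,
      In omega (Omega1 K s k0) /\ In upsilon (Omega2 K M s k0) /\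
      ((dC (IZR M) (IZR (rtc_lk M m N1 N2 Delta 1 k)) (IZR omega) = 0%R /\
        dC (IZR M) (IZR (rtc_lk M m N1 N2 Delta 2 k)) (IZR upsilon) = 0%R)
       \/
       (dC (IZR M) (IZR (rtc_lk M m N1 N2 Delta 2 k)) (IZR omega) = 0%R /\
        dC (IZR M) (IZR (rtc_lk M m N1 N2 Delta 1 k)) (IZR upsilon) = 0%R)).
Proof.
  set (tau := (M - 1) / 8).
  assert (Ht0 : 0 <= tau) by (unfold tau; Z.div_mod_to_equations; lia).
  assert (Ht8 : 8 * tau < M) by (unfold tau; Z.div_mod_to_equations; lia).
  assert (HD : forall l k, (1 <= l <= 2)%nat -> (1 <= k <= K)%nat -> Z.abs (Delta l k) <= tau).
  { intros l k Hl Hk. specialize (Htau l k Hl Hk). unfold tau. Z.div_mod_to_equations. lia. }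
  set (c1 := rc_l M N1 N2 1). set (c2 := rc_l M N1 N2 2).
  assert (Hsep : forall j, M <= 4 * Z.abs (c1 - c2 - j * M)).
  { apply dist_int; [lia|]. apply Hdist. }
  set (cl := fun v => col M tau c1 v).
  set (rt := fun l k => rtc_lk M m N1 N2 Delta l k).
  assert (Hin1 : forall k, (1 <= k <= K)%nat -> cl (rt 1%nat k) = true).
  { intros k Hk. unfold cl, rt. apply col_iff; try lia. apply rtc_inC; auto; apply HD; lia. }
  assert (Hin2 : forall k, (1 <= k <= K)%nat -> cl (rt 2%nat k) = false).
  { intros k Hk. unfold cl, rt. destruct (col M tau c1 _) eqn:E; auto. exfalso.
    apply col_iff in E; try lia.
    apply (inC_disj M tau c1 c2 _ Ht8 Hsep E). apply rtc_inC; auto; apply HD; lia. }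
  assert (Hlen : length s = (2 * K)%nat).
  { rewrite (Permutation_length Hsperm). unfold all_rtc.
    rewrite (flat_map_constant_length (c := 2%nat)); [rewrite length_seq; lia|].
    intros; reflexivity. }
  assert (HinS : forall v, In v s -> exists k, (1 <= k <= K)%nat /\ (v = rt 1%nat k \/ v = rt 2%nat k)).
  { intros v Hv. apply (Permutation_in _ Hsperm) in Hv. unfold all_rtc in Hv.
    apply in_flat_map in Hv. destruct Hv as [k [Hk Hv]]. apply in_seq in Hk.
    exists k. split; [lia|]. simpl in Hv. unfold rt. intuition. }
  assert (Hrt_in : forall l k, (l = 1 \/ l = 2)%nat -> (1 <= k <= K)%nat -> In (rt l k) s).
  { intros l k Hl Hk. apply (Permutation_in _ (Permutation_sym Hsperm)). unfold all_rtc.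
    apply in_flat_map. exists k. split; [apply in_seq; lia|]. unfold rt. simpl.
    destruct Hl; subst; auto. }
  assert (Hrange : forall v, In v s -> 0 <= v < M).
  { intros v Hv. destruct (HinS v Hv) as [k [Hk [E|E]]]; subst; apply rtc_range; auto. }
  assert (Hcls : forall v, In v s -> (cl v = true -> inC M tau c1 v) /\ (cl v = false -> inC M tau c2 v)).
  { intros v Hv. split; intros E.
    - apply col_iff in E; auto; lia.
    - destruct (HinS v Hv) as [k [Hk [E'|E']]]; subst.
      + rewrite Hin1 in E; auto; discriminate.
      + apply rtc_inC; auto; apply HD; lia. }
  assert (Hcls2 : forall v (b : bool), inC M tau (if b then c1 else c2) v -> cl v = b).
  { intros v b H. destruct b.
    - apply col_iff; auto; lia.
    - destruct (cl v) eqn:E; auto. exfalso. apply col_iff in E; try lia.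
      exact (inC_disj M tau c1 c2 v Ht8 Hsep E H). }
  set (t := fun i => nth i s 0).
  assert (Ht_in : forall i, (i < 2 * K)%nat -> In (t i) s).
  { intros i Hi. apply nth_In. lia. }
  assert (Hmono : forall i j, (i <= j)%nat -> (j < 2 * K)%nat -> t i <= t j).
  { intros i j Hij Hj. apply sorted_nth_mono; auto; lia. }
  assert (Pcol : forall i j (b : bool), (i <= j)%nat -> (j < 2 * K)%nat -> cl (t i) = b -> cl (t j) = b ->
     (t j - t i <= 2 * tau /\ forall l, (i <= l <= j)%nat -> cl (t l) = b) \/
     (M - 2 * tau <= t j - t i /\ forall l, (l < 2 * K)%nat -> (l <= i \/ j <= l)%nat -> cl (t l) = b)).
  { intros i j b Hij Hj Ei Ej.
    assert (Ci : inC M tau (if b then c1 else c2) (t i)).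
    { destruct b; apply Hcls; auto; apply Ht_in; lia. }
    assert (Cj : inC M tau (if b then c1 else c2) (t j)).
    { destruct b; apply Hcls; auto; apply Ht_in; lia. }
    pose proof (Hrange _ (Ht_in i ltac:(lia))). pose proof (Hrange _ (Ht_in j ltac:(lia))).
    destruct (P_val M tau _ (t i) (t j) Ht0 Ht8 ltac:(pose proof (Hmono i j Hij Hj); lia) ltac:(lia) Ci Cj)
      as [[A B]|[A B]].
    - left. split; auto. intros l Hl. apply Hcls2, B.
      split; apply Hmono; lia.
    - right. split; auto. intros l Hl Hl2. apply Hcls2, B.
      + apply Hrange, Ht_in; lia.
      + destruct Hl2; [left|right]; apply Hmono; lia. }
  assert (Hex1 : exists i, (i < 2 * K)%nat /\ cl (t i) = true).
  { destruct (In_nth _ _ 0 (Hrt_in 1%nat 1%nat ltac:(lia) ltac:(lia))) as [i [Hi E]].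
    exists i. split; [lia|]. unfold t. rewrite E. apply Hin1; lia. }
  assert (Hex2 : exists i, (i < 2 * K)%nat /\ cl (t i) = false).
  { destruct (In_nth _ _ 0 (Hrt_in 2%nat 1%nat ltac:(lia) ltac:(lia))) as [i [Hi E]].
    exists i. split; [lia|]. unfold t. rewrite E. apply Hin2; lia. }
  assert (Hnotall : forall c, ~ (forall l, (l < 2 * K)%nat -> cl (t l) = c)).
  { intros c H. destruct Hex1 as [i1 [Hi1 E1]], Hex2 as [i2 [Hi2 E2]].
    rewrite H in E1, E2 by auto. congruence. }
  set (b := negb (cl (t 0%nat))).
  assert (Hexb : exists l, (l < 2 * K)%nat /\ Bool.eqb (cl (t l)) b = true).
  { unfold b. destruct (cl (t 0%nat)).
    - destruct Hex2 as [i [Hi E]]. exists i. rewrite E. auto.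
    - destruct Hex1 as [i [Hi E]]. exists i. rewrite E. auto. }
  destruct (find_min _ _ Hexb) as [q [Hq [Hfq Hqmin]]].
  destruct (find_max _ _ Hexb) as [r [Hr [Hfr Hrmax]]].
  apply Bool.eqb_prop in Hfq, Hfr.
  assert (Hqr : (q <= r)%nat).
  { destruct (Nat.le_gt_cases q r); auto. specialize (Hrmax q ltac:(lia)).
    rewrite Hfq, Bool.eqb_reflx in Hrmax. discriminate. }
  assert (Hq1 : (1 <= q)%nat).
  { destruct q; [|lia]. unfold b in Hfq. destruct (cl (t 0%nat)); discriminate. }
  assert (Hchar : forall l, (l < 2 * K)%nat -> (cl (t l) = b <-> (q <= l <= r)%nat)).
  { destruct (Pcol q r b Hqr Hr Hfq Hfr) as [[_ B]|[_ B]].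
    - intros l Hl. split.
      + intros E. destruct (Nat.lt_ge_cases l q).
        * specialize (Hqmin l H). rewrite E, Bool.eqb_reflx in Hqmin. discriminate.
        * destruct (Nat.le_gt_cases l r); [lia|].
          specialize (Hrmax l ltac:(lia)). rewrite E, Bool.eqb_reflx in Hrmax. discriminate.
      + intros; apply B; lia.
    - exfalso. specialize (B 0%nat ltac:(lia) ltac:(lia)). unfold b in B.
      destruct (cl (t 0%nat)); discriminate. }
  clearbody b.
  assert (HcntK : length (filter (fun v => Bool.eqb (cl v) b) s) = K).
  { rewrite (perm_filter_length _ _ _ Hsperm). unfold all_rtc.
    apply (flat_count _ (fun k => rt 1%nat k) (fun k => rt 2%nat k)).
    intros k Hk. rewrite Hin1, Hin2 by lia. destruct b; reflexivity. }
  assert (Hcntqr : length (filter (fun v => Bool.eqb (cl v) b) s) = (r + 1 - q)%nat).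
  { rewrite filter_nth.
    rewrite (filter_ext_in _ (fun i => andb (Nat.leb q i) (Nat.leb i r))).
    - rewrite interval_count by lia. rewrite Hlen. lia.
    - intros i Hi. apply in_seq in Hi. rewrite Hlen in Hi. fold (t i).
      destruct (Bool.eqb (cl (t i)) b) eqn:E.
      + apply Bool.eqb_prop, Hchar in E; [|lia].
        symmetry. apply andb_true_intro. split; apply Nat.leb_le; lia.
      + symmetry. apply not_true_iff_false. intros H. apply andb_prop in H.
        destruct H as [H1 H2]. apply Nat.leb_le in H1, H2.
        assert (cl (t i) = b) by (apply Hchar; lia).
        rewrite H, Bool.eqb_reflx in E. discriminate. }
  assert (Hr_eq : r = (q + K - 1)%nat) by lia.
  assert (HqK : (q <= K)%nat) by lia.
  assert (Hsame : forall i j, (i < 2 * K)%nat -> (j < 2 * K)%nat ->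
            ((q <= i <= r)%nat <-> (q <= j <= r)%nat) -> cl (t i) = cl (t j)).
  { intros i j Hi Hj Hij. pose proof (Hchar i Hi). pose proof (Hchar j Hj).
    assert (H1 : cl (t i) = b <-> cl (t j) = b) by (rewrite H, H0; exact Hij).
    clear H H0. destruct (cl (t i)), (cl (t j)), b; try reflexivity; exfalso;
    first [discriminate (proj1 H1 eq_refl) | discriminate (proj2 H1 eq_refl)]. }
  assert (Hgap : forall i, (i + 1 < 2 * K)%nat -> cl (t i) = cl (t (i + 1)%nat) ->
            t (i + 1)%nat - t i <= 2 * tau).
  { intros i Hi E. destruct (Pcol i (i+1)%nat (cl (t i)) ltac:(lia) Hi eq_refl (eq_sym E))
      as [[A _]|[_ B]]; auto.
    exfalso. apply (Hnotall (cl (t i))). intros l Hl. apply B; lia. }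
  assert (Hwrap : cl (t 0%nat) = cl (t (2 * K - 1)%nat) -> t 0%nat - t (2 * K - 1)%nat + M <= 2 * tau).
  { intros E. destruct (Pcol 0%nat (2 * K - 1)%nat (cl (t 0%nat)) ltac:(lia) ltac:(lia) eq_refl (eq_sym E))
      as [[_ B]|[A _]]; [|lia].
    exfalso. apply (Hnotall (cl (t 0%nat))). intros l Hl. apply B; lia. }
  assert (HDg : forall i, (1 <= i < 2 * K)%nat -> Dgap K M s i = t i - t (i - 1)%nat).
  { intros i Hi. unfold Dgap, sidx, t. destruct (Nat.eqb_spec i (2 * K)); [lia|].
    replace (i + 1 - 1)%nat with i by lia. reflexivity. }
  assert (HDw : Dgap K M s (2 * K) = t 0%nat - t (2 * K - 1)%nat + M).
  { unfold Dgap, sidx, t. rewrite Nat.eqb_refl. reflexivity. }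
  assert (Hk0q : k0 = q).
  { destruct (Nat.eq_dec k0 q) as [|Hne]; auto. exfalso.
    assert (G1 : Dgap K M s k0 <= 2 * tau).
    { rewrite HDg by lia. replace k0 with ((k0 - 1) + 1)%nat at 1 by lia.
      apply Hgap; [lia|]. apply Hsame; lia. }
    assert (G2 : Dgap K M s (k0 + K) <= 2 * tau).
    { destruct (Nat.eq_dec k0 K) as [EK|NK].
      - subst k0. replace (K + K)%nat with (2 * K)%nat by lia. rewrite HDw.
        apply Hwrap. apply Hsame; lia.
      - rewrite HDg by lia. replace (k0 + K)%nat with ((k0 + K - 1) + 1)%nat at 1 by lia.
        apply Hgap; [lia|]. apply Hsame; lia. }
    lia. }
  subst k0.
  assert (HO1 : forall i, (q <= i <= r)%nat -> In (t i) (Omega1 K s q)).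
  { intros i Hi. unfold Omega1. apply in_map_iff. exists (i + 1)%nat. split.
    - unfold sidx, t. f_equal. lia.
    - apply in_seq. lia. }
  assert (HO2 : forall i, (i < 2 * K)%nat -> ~ (q <= i <= r)%nat ->
            exists u, In u (Omega2 K M s q) /\ exists j, t i - u = j * M).
  { intros i Hi Hni. unfold Omega2. destruct (Nat.eqb_spec q K) as [EK|NK].
    - exists (t i). split; [|exists 0; lia]. apply in_map_iff. exists (i + 1)%nat.
      split; [unfold sidx, t; f_equal; lia|]. apply in_seq. lia.
    - destruct (Nat.lt_ge_cases i q).
      + exists (t i). split; [|exists 0; lia]. apply in_or_app. right. apply in_map_iff.
        exists (i + 1)%nat. split; [unfold sidx, t; f_equal; lia|]. apply in_seq. lia.
      + exists (t i - M). split; [|exists 1; lia]. apply in_or_app. left. apply in_map_iff.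
        exists (i + 1)%nat. split; [unfold sidx, t; f_equal; f_equal; lia|]. apply in_seq. lia. }
  intros k Hk.
  destruct (In_nth _ _ 0 (Hrt_in 1%nat k ltac:(lia) Hk)) as [i1 [Hi1 E1]].
  destruct (In_nth _ _ 0 (Hrt_in 2%nat k ltac:(lia) Hk)) as [i2 [Hi2 E2]].
  rewrite Hlen in Hi1, Hi2. fold (t i1) in E1. fold (t i2) in E2.
  pose proof (Hin1 k Hk) as C1. pose proof (Hin2 k Hk) as C2.
  rewrite <- E1 in C1. rewrite <- E2 in C2.
  fold (rt 1%nat k). fold (rt 2%nat k).
  destruct b eqn:Eb.
  - assert (Q1 : (q <= i1 <= r)%nat) by (apply Hchar; auto).
    assert (Q2 : ~ (q <= i2 <= r)%nat) by (rewrite <- Hchar by auto; congruence).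
    destruct (HO2 i2 Hi2 Q2) as [u [Hu [j Hj]]].
    exists (t i1), u. split; [apply HO1; auto|]. split; auto. left. split.
    + rewrite <- E1. apply (dC_zero _ _ _ 0); lia.
    + rewrite <- E2. apply (dC_zero _ _ _ j); lia.
  - assert (Q2 : (q <= i2 <= r)%nat) by (apply Hchar; auto).
    assert (Q1 : ~ (q <= i1 <= r)%nat) by (rewrite <- Hchar by auto; congruence).
    destruct (HO2 i1 Hi1 Q1) as [u [Hu [j Hj]]].
    exists (t i2), u. split; [apply HO1; auto|]. split; auto. right. split.
    + rewrite <- E2. apply (dC_zero _ _ _ 0); lia.
    + rewrite <- E1. apply (dC_zero _ _ _ j); lia.
Qed.
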